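(* Let $q\ge2$ and $BS(1,q)=\langle a,b\mid aba^{-1}=b^q\rangle$. Then $P_0=\{a^n(a^{-m}b^ka^m): k>0,\ m,n\in\mathbb{Z}\}$ is a regular positive cone relative to $\langle a\rangle$. In particular, $P=\{a^n:n>0\}\cup P_0$ is a regular positive cone of $BS(1,q)$.
   Context: For a group $H$ and subgroup $K$, a positive cone relative to $K$ is a subsemigroup $P\subseteq H$ with $H=P\sqcup K\sqcup P^{-1}$; a positive cone is one relative to $\{1\}$. Such a set is regular if there are a finite set $X$, a surjective monoid homomorphism $\pi\colon X^*\to H$ and a language $\mathcal{L}\subseteq X^*$ accepted by a finite state automaton with $\pi(\mathcal{L})=P$. *)

(* Defs.v *)
From mathcomp Require Import all_boot all_order all_algebra.
From mathcomp Require Import ring.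
Set Implicit Arguments. Unset Strict Implicit. Unset Printing Implicit Defensive.
Import Order.TTheory GRing.Theory Num.Theory.
Local Open Scope ring_scope.

Section Generic.
Variables (G : Type) (mul : G -> G -> G) (inv : G -> G) (one : G).

Definition zpow (x : G) (n : int) : G :=
  match n with
  | Posz k => iter k (mul x) one
  | Negz k => inv (iter k.+1 (mul x) one)
  end.

Definition subsemigroup (P : G -> Prop) : Prop :=
  forall x y, P x -> P y -> P (mul x y).

Definition set_inv (P : G -> Prop) : G -> Prop :=
  fun g => exists x, P x /\ g = inv x.

Definition positive_cone_rel (K P : G -> Prop) : Prop :=
  subsemigroup P /\
  (forall g, P g \/ K g \/ set_inv P g) /\
  (forall g, ~ (P g /\ K g)) /\
  (forall g, ~ (K g /\ set_inv P g)) /\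
  (forall g, ~ (P g /\ set_inv P g)).

Definition positive_cone (P : G -> Prop) : Prop :=
  positive_cone_rel (fun g => g = one) P.

Definition word_eval (X : Type) (f : X -> G) (w : seq X) : G :=
  foldr (fun x acc => mul (f x) acc) one w.

Definition dfa_accepts (X S : Type) (s0 : S) (delta : S -> X -> S)
  (acc : pred S) (w : seq X) : bool := acc (foldl delta s0 w).

Definition regular_set (P : G -> Prop) : Prop :=
  exists (X : finType) (f : X -> G),
    (forall g, exists w : seq X, word_eval f w = g) /\
    exists (S : finType) (s0 : S) (delta : S -> X -> S) (acc : pred S),
      forall g, P g <-> exists w : seq X, dfa_accepts s0 delta acc w /\ word_eval f w = g.

End Generic.

(* The Baumslag-Solitar group BS(1,q) = <a, b | a b a^-1 = b^q>,      *)
(* realised as Z[1/q] ⋊ Z: the pair (x, n) stands for b^x a^n, with    *)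
(* (x, n) (y, m) = (x + q^n y, n + m), a = (0,1), b = (1,0).           *)

Definition Zinvq (q : nat) (x : rat) : Prop :=
  exists (k : nat) (z : int), x * (q%:R) ^+ k = z%:~R.

Lemma Zinvq_int q (z : int) : Zinvq q z%:~R.
Proof. by exists 0%N, z; rewrite expr0 mulr1. Qed.

Lemma Zinvq_opp q x : Zinvq q x -> Zinvq q (- x).
Proof. by case=> k [z hz]; exists k, (- z); rewrite mulNr hz intrN. Qed.

Lemma Zinvq_add q x y : Zinvq q x -> Zinvq q y -> Zinvq q (x + y).
Proof.
case=> k1 [z1 h1] [k2 [z2 h2]]; exists (k1 + k2)%N, (z1 * (q ^ k2)%N%:Z + z2 * (q ^ k1)%N%:Z).
have -> : (x + y) * (q%:R) ^+ (k1 + k2) =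
  (x * (q%:R) ^+ k1) * (q%:R) ^+ k2 + (y * (q%:R) ^+ k2) * (q%:R) ^+ k1.
  by rewrite exprD; ring.
by rewrite h1 h2 intrD !intrM -!natrX.
Qed.

Lemma Zinvq_scale q (n : int) x : Zinvq q x -> Zinvq q ((q%:R : rat) ^ n * x).
Proof.
case=> l [z hz]; case: n => k.
  exists l, (z * (q ^ k)%N%:Z).
  by rewrite /= -mulrA hz intrM -exprnP -pmulrn natrX mulrC.
have [q0|q0] := eqVneq q 0%N.
  by rewrite q0 NegzE -exprnN expr0n /= invr0 mul0r; exists 0%N, 0; rewrite mul0r.
exists (l + k.+1)%N, z; rewrite NegzE -exprnN exprD -hz.
have hQ : ((q%:R : rat) ^+ k.+1) != 0 by rewrite expf_neq0 // pnatr_eq0.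
by field.
Qed.

Definition BS (q : nat) := {x : rat * int | Zinvq q x.1}.

Definition bs_mul (q : nat) (g h : BS q) : BS q :=
  exist _ ((sval g).1 + (q%:R : rat) ^ (sval g).2 * (sval h).1, (sval g).2 + (sval h).2)
    (Zinvq_add (proj2_sig g) (Zinvq_scale (sval g).2 (proj2_sig h))).

Definition bs_inv (q : nat) (g : BS q) : BS q :=
  exist _ (- ((q%:R : rat) ^ (- (sval g).2) * (sval g).1), - (sval g).2)
    (Zinvq_opp (Zinvq_scale (- (sval g).2) (proj2_sig g))).

Definition bs_one (q : nat) : BS q := exist _ (0, 0) (Zinvq_int q 0).
Definition bs_a (q : nat) : BS q := exist _ (0, 1) (Zinvq_int q 0).
Definition bs_b (q : nat) : BS q := exist _ (1, 0) (Zinvq_int q 1).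

Definition bs_pow (q : nat) (g : BS q) (n : int) : BS q :=
  zpow (@bs_mul q) (@bs_inv q) (bs_one q) g n.

(* Main.v *)
Require Import Defs.
From mathcomp Require Import all_boot all_order all_algebra.
From mathcomp Require Import ring lra zify.
From Stdlib Require Import ProofIrrelevance.
Import GRing.Theory Num.Theory.
Local Open Scope ring_scope.

Section BSq.
Variable q : nat.
Hypothesis hq : (2 <= q)%N.
Let Q : rat := q%:R.

Lemma Q_gt0 : 0 < Q.
Proof. rewrite /Q ltr0n; by apply: leq_trans hq. Qed.
Lemma Q_neq0 : Q != 0.
Proof. exact: lt0r_neq0 Q_gt0. Qed.
Lemma Qz_gt0 (n : int) : 0 < Q ^ n.
Proof. exact: exprz_gt0 Q_gt0. Qed.

Lemma bs_eq (g h : BS q) : sval g = sval h -> g = h.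
Proof.
case: g h => [g pg] [h ph] /= e; subst h; f_equal; apply: proof_irrelevance.
Qed.

Lemma val_mul (g h : BS q) : sval (bs_mul g h) =
  ((sval g).1 + Q ^ (sval g).2 * (sval h).1, (sval g).2 + (sval h).2).
Proof. by []. Qed.

Lemma val_inv (g : BS q) : sval (bs_inv g) =
  (- (Q ^ (- (sval g).2) * (sval g).1), - (sval g).2).
Proof. by []. Qed.

Lemma bs_mulA (g h k : BS q) : bs_mul g (bs_mul h k) = bs_mul (bs_mul g h) k.
Proof.
apply: bs_eq; rewrite !val_mul /=; congr (_, _); last by rewrite addrA.
rewrite expfzDr ?Q_neq0 //; ring.
Qed.

Lemma bs_mul1g (g : BS q) : bs_mul (bs_one q) g = g.
Proof. apply: bs_eq; rewrite val_mul /=; case: (sval g) => x n /=; by rewrite add0r expr0z mul1r add0r. Qed.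

Lemma bs_mulg1 (g : BS q) : bs_mul g (bs_one q) = g.
Proof. apply: bs_eq; rewrite val_mul /=; case: (sval g) => x n /=; by rewrite mulr0 !addr0. Qed.

Lemma invK (g : BS q) : bs_inv (bs_inv g) = g.
Proof.
apply: bs_eq; rewrite !val_inv /=; case: (sval g) => x n /=; rewrite opprK; congr (_, _).
rewrite mulrN opprK mulrA -expfzDr ?Q_neq0 // ?opprK addrN expr0z mul1r //.
Qed.

Lemma val_pow_a (n : int) : sval (bs_pow (bs_a q) n) = (0, n).
Proof.
have H : forall k : nat, sval (iter k (bs_mul (bs_a q)) (bs_one q)) = (0, k%:Z).
  elim=> [|k IH]; first by [].
  rewrite iterS val_mul IH /= mulr0 addr0; congr (_, _); lia.
case: n => k; rewrite /bs_pow /zpow ?val_inv H //=.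
by rewrite mulr0 oppr0 NegzE.
Qed.

Lemma val_pow_b (n : int) : sval (bs_pow (bs_b q) n) = (n%:~R, 0).
Proof.
have H : forall k : nat, sval (iter k (bs_mul (bs_b q)) (bs_one q)) = (k%:R, 0).
  elim=> [|k IH]; first by [].
  rewrite iterS val_mul IH /=; by rewrite expr0z mul1r addr0 -natr1 addrC.
case: n => k; rewrite /bs_pow /zpow ?val_inv H //=.
by rewrite expr0z mul1r oppr0 NegzE mulrNz.
Qed.


Definition P0s (g : BS q) : Prop :=
  exists (n m k : int), 0 < k /\
      g = bs_mul (bs_pow (bs_a q) n) (bs_mul (bs_mul (bs_pow (bs_a q) (- m)) (bs_pow (bs_b q) k)) (bs_pow (bs_a q) m)).

Lemma P0_iff (g : BS q) : P0s g <-> 0 < (sval g).1.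
Proof.
split.
  case=> n [m [k [hk ->]]]; rewrite !val_mul !val_pow_a !val_pow_b /=.
  rewrite !mulr0 !addr0 !add0r; apply: mulr_gt0; first exact: Qz_gt0.
  by apply: mulr_gt0; [exact: Qz_gt0 | rewrite ltr0z].
case: g => [[x t] [j [z hz]]] /= hx.
have hQj : 0 < Q ^+ j by apply: exprn_gt0; exact: Q_gt0.
have hz0 : 0 < z by rewrite -(ltr0z rat) -hz; apply: mulr_gt0.
exists t, (t + j%:Z), z; split => //; apply: bs_eq.
rewrite !val_mul !val_pow_a !val_pow_b /=.
rewrite !mulr0 !addr0 !add0r; congr (_, _); last by lia.
rewrite mulrA -expfzDr ?Q_neq0 //.
have -> : t + - (t + j%:Z) = - (j%:Z) by lia.
rewrite -exprnN -hz /= mulrCA mulVf ?mulr1 //.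
exact: lt0r_neq0 hQj.
Qed.

Lemma K_iff (g : BS q) : (exists n : int, g = bs_pow (bs_a q) n) <-> (sval g).1 = 0.
Proof.
split; first by case=> n ->; rewrite val_pow_a.
move=> h; exists (sval g).2; apply: bs_eq; rewrite val_pow_a; move: h.
by case: (sval g) => x n /= ->.
Qed.

Lemma inv_x (g : BS q) : (sval (bs_inv g)).1 = - (Q ^ (- (sval g).2) * (sval g).1).
Proof. by []. Qed.
Lemma inv_n (g : BS q) : (sval (bs_inv g)).2 = - (sval g).2.
Proof. by []. Qed.

Lemma setinv0 (P : BS q -> Prop) (hP : forall g, P g <-> 0 < (sval g).1) (g : BS q) :
  set_inv (@bs_inv q) P g <-> (sval g).1 < 0.
Proof.
split.
  case=> h [/hP hh ->]; rewrite inv_x oppr_lt0; apply: mulr_gt0 => //; exact: Qz_gt0.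
move=> hg; exists (bs_inv g); rewrite invK; split => //; apply/hP.
rewrite inv_x oppr_gt0 pmulr_rlt0 //; exact: Qz_gt0.
Qed.

Definition Pl (g : BS q) := 0 < (sval g).1 \/ ((sval g).1 = 0 /\ 0 < (sval g).2).

Lemma setinvl (P : BS q -> Prop) (hP : forall g, P g <-> Pl g) (g : BS q) :
  set_inv (@bs_inv q) P g <-> ((sval g).1 < 0 \/ ((sval g).1 = 0 /\ (sval g).2 < 0)).
Proof.
split.
  case=> h [/hP hh ->]; rewrite inv_x inv_n.
  case: hh => [hh|[-> hh]].
    left; rewrite oppr_lt0; apply: mulr_gt0 => //; exact: Qz_gt0.
  by right; rewrite mulr0 oppr0 oppr_lt0.
move=> hg; exists (bs_inv g); rewrite invK; split => //; apply/hP.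
rewrite /Pl inv_x inv_n.
case: hg => [hg|[-> hg]].
  left; rewrite oppr_gt0 pmulr_rlt0 //; exact: Qz_gt0.
by right; rewrite mulr0 oppr0 oppr_gt0.
Qed.

Definition lett (i : 'I_4) : BS q :=
  match val i with 0%N => bs_a q | 1%N => bs_inv (bs_a q) | 2%N => bs_b q | _ => bs_inv (bs_b q) end.

Definition dnat (s x : nat) : nat :=
 match s, x with
 | 0, 1 => 0 | 0, 2 => 1
 | 1, 2 => 1 | 1, 0 => 2 | 1, 1 => 2
 | 2, 0 => 2 | 2, 1 => 2
 | 4, 0 => 4
 | 5, 0 => 4 | 5, 1 => 0 | 5, 2 => 1
 | _, _ => 3 end%N.

Definition run (s : nat) (w : seq 'I_4) := foldl (fun s (x : 'I_4) => dnat s x) s w.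

Definition Inv (s : nat) (g : BS q) : Prop :=
  match s with
  | 0%N => 0 < (sval g).1
  | 1%N => 0 <= (sval g).1
  | 2%N => (sval g).1 = 0
  | 3%N => False
  | 4%N => (sval g).1 = 0 /\ 0 <= (sval g).2
  | 5%N => Pl g
  | _ => True end.

Definition weval (w : seq 'I_4) := word_eval (@bs_mul q) (bs_one q) lett w.

Lemma inv_run w s : (run s w \in [:: 1; 2; 4]%N) -> Inv s (weval w).
Proof.
elim: w s => [|x w IH] s.
  by case: s => [|[|[|[|[|[|s]]]]]] //= _; rewrite ?lexx.
move=> /IH; rewrite /weval /=; set g := word_eval _ _ _ w.
case: s => [|[|[|[|[|[|s]]]]]] //; case: x => [[|[|[|[|?]]]] hx] //= H.
all: try (by []).
all: rewrite ?/Pl /= ?mulr0 ?oppr0 ?add0r ?expr0z ?mul1r.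
all: try (case: H => H H2).
all: try (rewrite H ?mulr0 ?addr0 ?lexx).
- by apply: mulr_gt0 => //; exact: Qz_gt0.
- lra.
- by [].
- by [].
- lra.
- by [].
- by [].
- split => //; lia.
- right; split => //; lia.
- left; apply: mulr_gt0 => //; exact: Qz_gt0.
- left; lra.
Qed.

Definition la : 'I_4 := @Ordinal 4 0 isT.
Definition lA : 'I_4 := @Ordinal 4 1 isT.
Definition lb : 'I_4 := @Ordinal 4 2 isT.
Definition lB : 'I_4 := @Ordinal 4 3 isT.

Definition wa (n : int) := match n with Posz k => nseq k la | Negz k => nseq k.+1 lA end.
Definition wb (n : int) := match n with Posz k => nseq k lb | Negz k => nseq k.+1 lB end.

Lemma weval_cat w1 w2 : weval (w1 ++ w2) = bs_mul (weval w1) (weval w2).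
Proof.
elim: w1 => [|x w1 IH] /=; first by rewrite bs_mul1g.
by rewrite /weval /= -/(weval (w1 ++ w2)) IH -bs_mulA.
Qed.

Lemma weval_cons x w : weval (x :: w) = bs_mul (lett x) (weval w).
Proof. by []. Qed.

Lemma ev_la k : sval (weval (nseq k la)) = (0, k%:Z).
Proof.
elim: k => [//|k IH]; rewrite (weval_cons la) val_mul IH /= mulr0 addr0; congr (_, _); lia.
Qed.
Lemma ev_lA k : sval (weval (nseq k lA)) = (0, - k%:Z).
Proof.
elim: k => [//|k IH]; rewrite (weval_cons lA) val_mul IH /= mulr0 oppr0 addr0; congr (_, _); lia.
Qed.
Lemma ev_lb k : sval (weval (nseq k lb)) = (k%:R, 0).
Proof.
elim: k => [//|k IH]; rewrite (weval_cons lb) val_mul IH /= expr0z mul1r addr0; congr (_, _).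
by rewrite -natr1 addrC.
Qed.
Lemma ev_lB k : sval (weval (nseq k lB)) = (- k%:R, 0).
Proof.
elim: k => [//|k IH]; rewrite (weval_cons lB) val_mul IH /= oppr0 !expr0z !mul1r addr0; congr (_, _).
by rewrite -natr1 opprD addrC.
Qed.
Lemma ev_wa n : sval (weval (wa n)) = (0, n).
Proof. by case: n => k; rewrite /wa ?ev_la ?ev_lA // NegzE. Qed.
Lemma ev_wb n : sval (weval (wb n)) = (n%:~R, 0).
Proof. by case: n => k; rewrite /wb ?ev_lb ?ev_lB // NegzE mulrNz. Qed.

Lemma word_for x t j z (hz : x * Q ^+ j = z%:~R) :
  sval (weval (nseq j lA ++ wb z ++ wa (t + j%:Z))) = (x, t).
Proof.
rewrite !weval_cat !val_mul ev_lA ev_wb ev_wa /= mulr0 addr0 add0r.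
congr (_, _); last by lia.
rewrite -hz -exprnN mulrCA mulVf ?mulr1 //.
apply: lt0r_neq0; apply: exprn_gt0; exact: Q_gt0.
Qed.

Lemma run_cat s w1 w2 : run s (w1 ++ w2) = run (run s w1) w2.
Proof. exact: foldl_cat. Qed.
Lemma run0A j : run 0 (nseq j lA) = 0%N.
Proof. by elim: j. Qed.
Lemma run1b j : run 1 (nseq j lb) = 1%N.
Proof. by elim: j. Qed.
Lemma run2a n : run 2 (wa n) = 2%N.
Proof. case: n => k /=; by elim: k. Qed.
Lemma run1a n : run 1 (wa n) \in [:: 1; 2; 4]%N.
Proof.
case: n => [[|k]|k] //=; first by rewrite (run2a (Posz k)).
by elim: k.
Qed.
Lemma run4a k : run 4 (nseq k la) = 4%N.
Proof. by elim: k. Qed.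

Lemma pos_word s (hs : dnat s 1 = 0%N) (g : BS q) : 0 < (sval g).1 ->
  exists w, run s w \in [:: 1; 2; 4]%N /\ weval w = g.
Proof.
case: g => [[x t] [j [z hz]]] /= hx.
have hQj : 0 < Q ^+ j by apply: exprn_gt0; exact: Q_gt0.
have hz0 : 0 < z by rewrite -(ltr0z rat) -hz; apply: mulr_gt0.
have hz' : x * Q ^+ j.+1 = (z * q%:Z)%:~R.
  by rewrite /= in hz; rewrite exprSr mulrA hz intrM -pmulrn.
have hpos : 0 < z * q%:Z by apply: mulr_gt0 => //; lia.
have [k hk] : exists k : nat, z * q%:Z = Posz k.+1.
  case E: (z * q%:Z) hpos => [[|k]|k] //; by exists k.
exists (nseq j.+1 lA ++ wb (z * q%:Z) ++ wa (t + j.+1%:Z)); split.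
  rewrite /= /run /= hs -/(run 0 _) run_cat run0A hk /= -/(run 1 _) run_cat run1b.
  exact: run1a.
apply: bs_eq; exact: (@word_for x t _ _ hz').
Qed.

Lemma dnat_lt s x : (dnat s x < 6)%N.
Proof. by case: s => [|[|[|[|[|[|s]]]]]]; case: x => [|[|[|x]]]. Qed.

Definition delta (s : 'I_6) (x : 'I_4) : 'I_6 := inord (dnat s x).
Definition accS : pred 'I_6 := fun s => val s \in [:: 1; 2; 4]%N.

Lemma vi0 : val (inord 0 : 'I_6) = 0%N. Proof. exact: inordK. Qed.
Lemma vi5 : val (inord 5 : 'I_6) = 5%N. Proof. exact: inordK. Qed.

Lemma val_foldl (s : 'I_6) w : val (foldl delta s w) = run (val s) w.
Proof.
elim: w s => [//|x w IH] s /=; rewrite IH /delta; congr run; apply: inordK; exact: dnat_lt.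
Qed.

Lemma surj_weval (g : BS q) : exists w, weval w = g.
Proof.
case: g => [[x t] [j [z hz]]].
exists (nseq j lA ++ wb z ++ wa (t + j%:Z)); apply: bs_eq; exact: word_for.
Qed.

End BSq.
Theorem lemma3p13 (q : nat) (hq : (2 <= q)%N) :
  let a := bs_a q in
  let b := bs_b q in
  let P0 : BS q -> Prop := fun g =>
    exists (n m k : int), 0 < k /\
      g = bs_mul (bs_pow a n) (bs_mul (bs_mul (bs_pow a (- m)) (bs_pow b k)) (bs_pow a m)) in
  let K : BS q -> Prop := fun g => exists n : int, g = bs_pow a n in
  let P : BS q -> Prop := fun g => (exists n : int, 0 < n /\ g = bs_pow a n) \/ P0 g in
  (positive_cone_rel (@bs_mul q) (@bs_inv q) K P0 /\
   regular_set (@bs_mul q) (bs_one q) P0) /\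
  (positive_cone (@bs_mul q) (@bs_inv q) (bs_one q) P /\
   regular_set (@bs_mul q) (bs_one q) P).
Proof.
move=> a b P0 K P.
have hP0 : forall g, P0 g <-> 0 < (sval g).1 := P0_iff q hq.
have hK : forall g, K g <-> (sval g).1 = 0 := @K_iff q.
have hP : forall g, P g <-> Pl q g.
  move=> g; split.
    case=> [[n [hn ->]]|/hP0 h]; last by left.
    by right; rewrite val_pow_a.
  case=> [h|[h1 h2]]; first by right; apply/hP0.
  left; exists (sval g).2; split => //; apply: bs_eq; rewrite val_pow_a.
  by move: h1; case: (sval g) => x n /= ->.
have hI0 := setinv0 q hq P0 hP0.
have hIl := setinvl q hq P hP.
have Qp := Qz_gt0 q hq.
split; split.
- split; [|split; [|split; [|split]]].
  + move=> g h /hP0 hg /hP0 hh; apply/hP0; rewrite val_mul /=.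
    by apply: addr_gt0 hg (mulr_gt0 (Qp _) hh).
  + move=> g; case: (ltrgtP (sval g).1 0) => h.
    * by right; right; apply/hI0.
    * by left; apply/hP0.
    * by right; left; apply/hK.
  + by move=> g [/hP0 h1 /hK h2]; lra.
  + by move=> g [/hK h1 /hI0 h2]; lra.
  + by move=> g [/hP0 h1 /hI0 h2]; lra.
- exists 'I_4, (@lett q); split; first exact: surj_weval q hq.
  exists 'I_6, (inord 0), delta, accS.
  move=> g; rewrite hP0; split.
    move=> hx; case: (pos_word q hq 0 erefl g hx) => // w [hw <-]; exists w; split => //.
    by rewrite /dfa_accepts /accS val_foldl vi0.
  case=> w [hw <-]; move: hw; rewrite /dfa_accepts /accS val_foldl vi0 //.
  by move/(inv_run q hq).
- split; [|split; [|split; [|split]]].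
  + move=> g h /hP hg /hP hh; apply/hP; rewrite /Pl val_mul /=.
    case: hg => [hg|[hg1 hg2]]; case: hh => [hh|[hh1 hh2]].
    * by left; apply: addr_gt0 hg (mulr_gt0 (Qp _) hh).
    * by left; rewrite hh1 mulr0 addr0.
    * by left; rewrite hg1 add0r; apply: mulr_gt0 (Qp _) hh.
    * by right; rewrite hg1 hh1 mulr0 addr0; split => //; lia.
  + move=> g; case: (ltrgtP (sval g).1 0) => h.
    * by right; right; apply/hIl; left.
    * by left; apply/hP; left.
    * case: (ltrgtP (sval g).2 0) => hn.
      -- by right; right; apply/hIl; right.
      -- by left; apply/hP; right.
      -- right; left; apply: bs_eq; move: h hn; rewrite /bs_one /=.
         by case: (sval g) => x n /= -> ->.
  + move=> g [/hP hg e]; subst g; move: hg; rewrite /Pl /=; case=> [h|[_ h]]; [lra | lia].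
  + move=> g [e /hIl]; subst g; rewrite /=; case=> [h|[_ h]]; [lra | lia].
  + move=> g [/hP [h|[h1 h2]] /hIl [h'|[h1' h2']]]; try lra; lia.
- exists 'I_4, (@lett q); split; first exact: surj_weval q hq.
  exists 'I_6, (inord 5), delta, accS.
  move=> g; rewrite hP; split.
    case=> [hx|[hx hn]].
      case: (pos_word q hq 5 erefl g hx) => // w [hw <-]; exists w; split => //.
      by rewrite /dfa_accepts /accS val_foldl vi5.
    have [k hk] : exists k : nat, (sval g).2 = Posz k.+1.
      case E: (sval g).2 hn => [[|k]|k] //; by exists k.
    exists (nseq k.+1 la); split.
      by rewrite /dfa_accepts /accS val_foldl vi5 //= -/(run 4 _) run4a.
    apply: bs_eq; rewrite (ev_la q k.+1); move: hx hk.
    by case: (sval g) => x n /= -> ->.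
  case=> w [hw <-]; move: hw; rewrite /dfa_accepts /accS val_foldl vi5 //.
  by move/(inv_run q hq).
Qed.
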